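(* Let $n \ge 3$, let $x_1, \dots, x_n \in \mathbb{R}$ be pairwise distinct, let $h(\theta) = \prod_{j=1}^n (x_j-\theta)$ and $q(\theta) = \theta - n\,h(\theta)/h'(\theta)$. Then $q$ maps the upper half-plane $\{\Im\theta>0\}$ into the lower half-plane $\{\Im\theta<0\}$, and maps the lower half-plane into the upper half-plane. *)

(* Defs.v *)
From HB Require Import structures.
From mathcomp Require Import all_boot all_order all_algebra.
From mathcomp Require Import complex.
Set Implicit Arguments. Unset Strict Implicit. Unset Printing Implicit Defensive.
Import Order.TTheory GRing.Theory Num.Theory.
Local Open Scope ring_scope.

Definition hpoly (R : rcfType) (n : nat) (x : 'I_n -> R) : {poly R[i]} :=
  \prod_(j < n) ((x j)%:C%C%:P - 'X).

Definition qmap (R : rcfType) (n : nat) (x : 'I_n -> R) (t : R[i]) : R[i] :=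
  t - n%:R * (hpoly x).[t] / (hpoly x)^`().[t].

(* Main.v *)
Require Import Defs.
From HB Require Import structures.
From mathcomp Require Import all_boot all_order all_algebra.
From mathcomp Require Import complex.
Import Order.TTheory GRing.Theory Num.Theory.
Local Open Scope ring_scope.
From mathcomp Require Import ring lra.

Section S.
Variable R : rcfType.

Lemma ImD (x y : R[i]) : complex.Im (x + y) = complex.Im x + complex.Im y.
Proof. by case: x; case: y. Qed.
Lemma ReD (x y : R[i]) : complex.Re (x + y) = complex.Re x + complex.Re y.
Proof. by case: x; case: y. Qed.
Lemma ImV (z : R[i]) : complex.Im (z^-1) = - complex.Im z / (complex.Re z ^+ 2 + complex.Im z ^+ 2).
Proof. case: z => a b /=. by rewrite mulNr. Qed.
Lemma ReV (z : R[i]) : complex.Re (z^-1) = complex.Re z / (complex.Re z ^+ 2 + complex.Im z ^+ 2).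
Proof. by case: z => a b /=. Qed.
Lemma ImR (k : R) (z : R[i]) : complex.Im (k%:C%C * z) = k * complex.Im z.
Proof. case: z => a b /=. ring. Qed.
Lemma ImB (x : R) (t : R[i]) : complex.Im (x%:C%C - t) = - complex.Im t.
Proof. case: t => a b /=. ring. Qed.
Lemma deriv_prod (I : Type) (r : seq I) (F : I -> R[i]) (t : R[i]) :
  all (fun j => F j - t != 0) r ->
  (\prod_(j <- r) ((F j)%:P - 'X))^`().[t] =
  - (\prod_(j <- r) ((F j)%:P - 'X)).[t] * \sum_(j <- r) (F j - t)^-1.
Proof.
elim: r => [|a r IH] /=; first by rewrite !big_nil derivC horner0 mulr0.
case/andP=> Ha Hr.
rewrite !big_cons derivM !hornerD !hornerM IH // derivB derivC derivX !hornerE.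
set H := (\prod_(j <- r) _).[t].
rewrite /= mulrDr !mulNr [(F a - t) * H / _]mulrAC mulfV // !mul1r.
by rewrite mulrN mulNr.
Qed.

Lemma var_id (m : nat) (p : 'I_m -> R) :
  m%:R * (m%:R * \sum_k p k ^+ 2) - m%:R * (\sum_k p k) ^+ 2
  = \sum_k (m%:R * p k - \sum_l p l) ^+ 2.
Proof.
set P := \sum_l p l.
rewrite [RHS](eq_bigr (fun k => m%:R ^+ 2 * p k ^+ 2 - (2 * m%:R * P) * p k + P ^+ 2));
  last by move=> k _; ring.
rewrite big_split sumrB /= -!mulr_sumr sumr_const card_ord -/P.
rewrite -[_ *+ m]mulr_natl. ring.
Qed.

Lemma cs_strict (m : nat) (p q : 'I_m -> R) (i j : 'I_m) :
  (p i != p j) || (q i != q j) ->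
  (\sum_k p k) ^+ 2 + (\sum_k q k) ^+ 2 < m%:R * \sum_k (p k ^+ 2 + q k ^+ 2).
Proof.
move=> Hne.
have m0 : (0 < m)%N by case: m i {p q j Hne} => [[]|].
have m0R : (0 : R) < m%:R by rewrite ltr0n.
rewrite -subr_gt0 -(pmulr_rgt0 _ m0R).
have -> : m%:R * (m%:R * \sum_k (p k ^+ 2 + q k ^+ 2) - ((\sum_k p k) ^+ 2 + (\sum_k q k) ^+ 2))
   = \sum_k ((m%:R * p k - \sum_l p l) ^+ 2 + (m%:R * q k - \sum_l q l) ^+ 2).
  rewrite !big_split /= -(@var_id m p) -(@var_id m q). ring.
rewrite lt_def sumr_ge0 ?andbT; last by move=> k _; rewrite addr_ge0 // sqr_ge0.
apply/negP => /eqP H0.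
have := psumr_eq0P _ H0.
have Hk: forall k : 'I_m, 0 <= (m%:R * p k - \sum_l p l) ^+ 2 + (m%:R * q k - \sum_l q l) ^+ 2.
  by move=> k; rewrite addr_ge0 // sqr_ge0.
move=> /(_ (fun k _ => Hk k)) Z.
have Zi := Z i isT; have Zj := Z j isT.
move: Zi Zj => /eqP Zi /eqP Zj; move: Zi Zj; rewrite !paddr_eq0 ?sqr_ge0 // !sqrf_eq0 !subr_eq0.
case/andP=> /eqP Pi /eqP Qi /andP [/eqP Pj /eqP Qj].
have mn0 : (m%:R : R) != 0 by rewrite lt0r_neq0.
move: Hne; rewrite -Pj in Pi; rewrite -Qj in Qi.
by rewrite (mulfI mn0 Pi) (mulfI mn0 Qi) !eqxx.
Qed.
Lemma ImS (I : Type) (r : seq I) (F : I -> R[i]) :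
  complex.Im (\sum_(j <- r) F j) = \sum_(j <- r) complex.Im (F j).
Proof. exact: (big_morph _ (@ImD) (erefl _)). Qed.
Lemma ReS (I : Type) (r : seq I) (F : I -> R[i]) :
  complex.Re (\sum_(j <- r) F j) = \sum_(j <- r) complex.Re (F j).
Proof. exact: (big_morph _ (@ReD) (erefl _)). Qed.

Lemma main_aux (n : nat) (x : 'I_n.+2 -> R) (t : R[i]) :
  injective x -> complex.Im t != 0 ->
  exists k : R, k < 0 /\ complex.Im (qmap x t) = complex.Im t * k.
Proof.
move=> xinj hb.
set b := complex.Im t in hb *.
set z := fun j => (x j)%:C%C - t.
have zne : forall j, z j != 0.
  move=> j; apply/eqP => E; have := congr1 (@complex.Im R) E.
  by rewrite /z ImB /= => /eqP; rewrite oppr_eq0 (negPf hb).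
have hval : (hpoly x).[t] = \prod_j z j.
  by rewrite /hpoly horner_prod; apply: eq_bigr => j _; rewrite !hornerE.
have H0 : (hpoly x).[t] != 0 by rewrite hval prodf_seq_neq0; apply/allP => j _; exact: zne.
set U := \sum_j (z j)^-1.
have hder : (hpoly x)^`().[t] = - (hpoly x).[t] * U.
  by rewrite /hpoly deriv_prod //; apply/allP => j _; exact: zne.
have qeq : qmap x t = t + n.+2%:R * U^-1.
  rewrite /qmap hder invfM invrN mulNr mulrN mulrA mulfK //.
  by rewrite opprK.
set p := fun j => complex.Re (z j)^-1.
set q := fun j => complex.Im (z j)^-1.
have hq : forall j, q j = b * (p j ^+ 2 + q j ^+ 2).
  move=> j; rewrite /p /q ImV ReV /z ImB -/b.
  move: (complex.Re ((x j)%:C%C - t)) => c.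
  have d0 : c ^+ 2 + (- b) ^+ 2 != 0.
    rewrite lt0r_neq0 // ltr_wpDl ?sqr_ge0 // lt0r sqr_ge0 andbT.
    by rewrite sqrf_eq0 oppr_eq0.
  rewrite !opprK sqrrN in d0 *. by field.
set S2 := \sum_j (p j ^+ 2 + q j ^+ 2).
have hImU : complex.Im U = b * S2 by rewrite /U ImS mulr_sumr; apply: eq_bigr => k _; exact: hq.
have hReU : complex.Re U = \sum_j p j by rewrite /U ReS.
have CS : (\sum_j p j) ^+ 2 + (\sum_j q j) ^+ 2 < n.+2%:R * S2.
  apply: (@cs_strict _ p q ord0 (Ordinal (isT : (1 < n.+2)%N))).
  rewrite -negb_and; apply/negP => /andP [/eqP E1 /eqP E2].
  have : (z ord0)^-1 = (z (Ordinal (isT : (1 < n.+2)%N)))^-1.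
    move: E1 E2; rewrite /p /q.
    by case: ((z ord0)^-1) => ? ?; case: ((z _)^-1) => ? ? /= -> ->.
  move/invr_inj; rewrite /z => /addIr /complexI /xinj /(congr1 val) //.
have hImUq : complex.Im U = \sum_j q j by rewrite /U ImS.
set D := (\sum_j p j) ^+ 2 + (\sum_j q j) ^+ 2 in CS.
have S2pos : 0 < S2.
  have : 0 <= D by rewrite addr_ge0 ?sqr_ge0.
  move=> /le_lt_trans /(_ CS). by rewrite pmulr_rgt0 // ltr0n.
have Dpos : 0 < D.
  rewrite /D ltr_wpDl ?sqr_ge0 // -hImUq hImU lt0r sqr_ge0 andbT sqrf_eq0 mulf_neq0 //.
  by rewrite lt0r_neq0.
exists ((D - n.+2%:R * S2) / D); split.
  by rewrite pmulr_llt0 ?invr_gt0 // subr_lt0.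
rewrite qeq ImD -/b -(rmorph_nat (real_complex R)) ImR ImV hImU hReU.
have -> : (\sum_j p j) ^+ 2 + (b * S2) ^+ 2 = D by rewrite /D -hImUq hImU.
have D0 : D != 0 by rewrite lt0r_neq0.
by field.
Qed.
End S.

Theorem mainTheorem8 (R : rcfType) (n : nat) (x : 'I_n -> R) :
  (3 <= n)%N -> injective x ->
  (forall t : R[i], 0 < complex.Im t -> complex.Im (qmap x t) < 0) /\
  (forall t : R[i], complex.Im t < 0 -> 0 < complex.Im (qmap x t)).
Proof.
case: n x => [|[|n]] // x _ xinj; split => t ht.
- have [k [k0 ->]] := @main_aux R _ x t xinj (lt0r_neq0 ht).
  by rewrite pmulr_rlt0.
- have [k [k0 ->]] := @main_aux R _ x t xinj (ltr0_neq0 ht).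
  by rewrite nmulr_rgt0.
Qed.
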